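(* Let $k\ge 3$, $K=\{1,\dots,k\}$, $T\subseteq K$ with $|T|=2$, and let $\bm v_1$ be a point of $PG(k-1,q)$ with $\mathrm{supp}(\bm v_1)\cap T=\emptyset$; set $\mathcal V=\{\bm v_1\}$ and $M=X^T\cup Y^T_{\mathcal V}\cup Z^T$. Let $C$ be the code over $\mathbb{F}_q$ with generator matrix $G$ whose columns are representing vectors of the points of $M$, one for each point. Then $C$ is an $[|M|,k]$ code with $d(C^\perp)=3$ and $\gamma(C)=k-1=k-d(C^\perp)+2$.
   Context: Points of $PG(k-1,q)$ are one-dimensional subspaces of $\mathbb{F}_q^k$, identified with any nonzero representing vector; the support $\mathrm{supp}(\bm x)=\{i:x_i\neq0\}$ of a point is well defined. $\bm e_i$ denotes the $i$-th standard unit vector of $\mathbb{F}_q^k$. Define $X^T=\{\bm x\in PG(k-1,q): \mathrm{supp}(\bm x)\cap T=\emptyset\}$; $Y^T_{\mathcal V}=\{\bm x\in PG(k-1,q): |\mathrm{supp}(\bm x)\cap T|=1\}$ minus all points represented by $\bm v_i+\lambda\bm e_j$ with $\bm v_i\in\mathcal V$, $j\in T$, $\lambda\in\mathbb{F}_q\setminus\{0\}$; $Z^T=\{\bm x\in PG(k-1,q): \mathrm{supp}(\bm x)\text{ is a 2-element subset of }T\}$. An $[n,k]$ code over $\mathbb{F}_q$ is a $k$-dimensional subspace $C\subseteq\mathbb{F}_q^n$; $E=\{1,\dots,n\}$; for $B\subseteq\mathbb{F}_q^n$, $\mathrm{Supp}(B)=\bigcup_{\bm x\in B}\mathrm{supp}(\bm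 x)$. $C^\perp$ is the dual code with respect to the standard inner product and $d(C^\perp)$ is the minimum weight (number of nonzero coordinates) of a nonzero codeword of $C^\perp$. The covering dimension is $\gamma(C)=\infty$ if $\mathrm{Supp}(C)\neq E$, and otherwise $\gamma(C)$ is the least positive integer $r$ such that $C$ has an $r$-dimensional subspace $D$ with $\mathrm{Supp}(D)=E$. *)

(* Defs.v *)
From HB Require Import structures.
From mathcomp Require Import all_boot all_order all_algebra.
Set Implicit Arguments. Unset Strict Implicit. Unset Printing Implicit Defensive.
Import GRing.Theory.
Local Open Scope ring_scope.

Section Defs.
Variable F : finFieldType.

Definition supp (k : nat) (x : 'rV[F]_k) : {set 'I_k} := [set i | x 0 i != 0].

Definition wt (n : nat) (y : 'rV[F]_n) : nat := #|supp y|.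

Definition unitv (k : nat) (i : 'I_k) : 'rV[F]_k := delta_mx 0 i.

(* The projective point (one-dimensional subspace) spanned by x,
   represented canonically by the mxalgebra generator <<x>>. *)
Definition point (k : nat) (x : 'rV[F]_k) : 'M[F]_k := (<<x>>)%MS.

Definition inX (k : nat) (T : {set 'I_k}) (x : 'rV[F]_k) : bool :=
  (x != 0) && [disjoint supp x & T].

Definition inY (k : nat) (T : {set 'I_k}) (V : {set 'rV[F]_k}) (x : 'rV[F]_k) : bool :=
  [&& x != 0, #|supp x :&: T| == 1%N &
   ~~ [exists v in V, exists j in T, exists l : F,
        (l != 0) && (point x == point (v + l *: unitv j))]].

Definition inZ (k : nat) (T : {set 'I_k}) (x : 'rV[F]_k) : bool :=
  (supp x \subset T) && (#|supp x| == 2%N).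

Definition Mset (k : nat) (T : {set 'I_k}) (V : {set 'rV[F]_k}) : {set 'M[F]_k} :=
  [set point x | x in [set x : 'rV[F]_k | [|| inX T x, inY T V x | inZ T x]]].

(* Code C = row space of G : 'M_(k,n); dual code = {y | G y^T = 0}.
   Minimum distance of the dual code (n.+1 acts as "infinity" if the dual is trivial). *)
Definition dual_dist (k n : nat) (G : 'M[F]_(k, n)) : nat :=
  \big[minn/n.+1]_(y : 'rV[F]_n | (G *m y^T == 0) && (y != 0)) wt y.

(* Supp(D) = E for the subspace spanned by the rows of D *)
Definition supp_full (m n : nat) (D : 'M[F]_(m, n)) : bool :=
  [forall i : 'I_n, [exists x : 'rV[F]_n, (x <= D)%MS && (x 0 i != 0)]].

Definition cov_ok (k n : nat) (G : 'M[F]_(k, n)) (r : nat) : bool :=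
  (0 < r)%N && [exists D : 'M[F]_n, [&& (D <= G)%MS, \rank D == r & supp_full D]].

(* Covering dimension; None stands for infinity. Any subspace has dimension <= n,
   so the least r is searched in 0..n. *)
Definition gamma (k n : nat) (G : 'M[F]_(k, n)) : option nat :=
  if supp_full G then Some (\big[minn/n.+1]_(r < n.+1 | cov_ok G r) (r : nat))
  else None.

End Defs.

(* Main.v *)
Require Import Defs.
From HB Require Import structures.
From mathcomp Require Import all_boot all_order all_algebra.
From mathcomp Require Import ring zify.
Import GRing.Theory.
Local Open Scope ring_scope.

Set Implicit Arguments. Unset Strict Implicit. Unset Printing Implicit Defensive.

Lemma pt_prop (F : finFieldType) k (x y : 'rV[F]_k) :
  point x = point y -> exists mu, y = mu *: x.
Proof. by move/genmxP/andP => [_ /sub_rVP]. Qed.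

Lemma pt_scale (F : finFieldType) k (x : 'rV[F]_k) mu :
  mu != 0 -> point (mu *: x) = point x.
Proof. by move=> mu0; apply/genmxP/eqmxP; apply: eqmx_scale. Qed.

Lemma supp_scale (F : finFieldType) k (x : 'rV[F]_k) mu :
  mu != 0 -> supp (mu *: x) = supp x.
Proof. by move=> mu0; apply/setP => i; rewrite !inE mxE mulf_eq0 negb_or mu0. Qed.

Lemma MsetI (F : finFieldType) k (T : {set 'I_k}) V (x : 'rV[F]_k) :
  [|| inX T x, inY T V x | inZ T x] -> point x \in Mset T V.
Proof. by move=> h; apply: imset_f; rewrite inE. Qed.

Lemma MsetE (F : finFieldType) k (T : {set 'I_k}) V (x : 'rV[F]_k) :
  point x \in Mset T V -> exists2 y, [|| inX T y, inY T V y | inZ T y] & point x = point y.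
Proof. by case/imsetP => y; rewrite inE => hy e; exists y. Qed.

Lemma unitvE (F : finFieldType) k (j i : 'I_k) : (unitv F j) 0 i = (j == i)%:R.
Proof. by rewrite /unitv mxE eq_sym. Qed.

Lemma colu (F : finFieldType) k (u : 'rV[F]_k) a : (u *m delta_mx a (0 : 'I_1)) 0 0 = u 0 a.
Proof. by rewrite -colE mxE. Qed.

Lemma exc_form (F : finFieldType) k (T : {set 'I_k}) (v1 u : 'rV[F]_k) :
  ~~ inY T [set v1] u -> u != 0 -> #|supp u :&: T| == 1%N ->
  exists j l mu, j \in T /\ u = mu *: (v1 + l *: unitv F j).
Proof.
rewrite /inY => /negP h u0 c1.
have : [exists v in [set v1], exists j in T, exists l : F,
        (l != 0) && (point u == point (v + l *: unitv F j))].
  by apply/negP => hn; apply: h; rewrite u0 c1 hn.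
case/existsP => v /andP [/set1P -> /existsP [j /andP [jT /existsP [l /andP [_ /eqP e]]]]].
have [mu e2] := pt_prop (esym e).
by exists j, l, mu.
Qed.

Lemma coordY (F : finFieldType) k (v1 : 'rV[F]_k) j l mu i :
  (mu *: (v1 + l *: unitv F j)) 0 i = mu * (v1 0 i + l * (j == i)%:R).
Proof. by rewrite !mxE eq_sym. Qed.

Lemma lineM (F : finFieldType) k (a b : 'I_k) (v1 : 'rV[F]_k) (W : 'M[F]_k) :
  a != b -> v1 0 a = 0 -> v1 0 b = 0 -> (2 <= \rank W)%N ->
  exists2 u : 'rV_k, (u <= W)%MS & point u \in Mset [set a; b] [set v1].
Proof.
move=> ab va vb rW.
pose P : 'M[F]_(k, 1 + 1) := row_mx (delta_mx a 0) (delta_mx b 0).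
have uP (u : 'rV[F]_k) : u *m P = row_mx (col a u) (col b u) by rewrite mul_mx_row !colE.
have := mxrank_mul_ker W P.
case: (posnP (\rank (W :&: kermx P))) => [r0 | rpos].
  rewrite r0 addn0 => rWP.
  have full : row_full (W *m P).
    by rewrite /row_full eqn_leq rank_leq_col /= rWP.
  have getu (z : 'rV[F]_(1 + 1)) : exists2 u : 'rV[F]_k, (u <= W)%MS & u *m P = z.
    have : (z <= W *m P)%MS by apply: submx_full.
    case/submxP => y ->; exists (y *m W); [exact: submxMl | by rewrite mulmxA].
  have [ua uaW uaP] := getu (row_mx 1%:M 0).
  have [ub ubW ubP] := getu (row_mx 0 1%:M).
  rewrite uP in uaP; rewrite uP in ubP.
  case/eq_row_mx: uaP => /matrixP/(_ 0 0) uaa /matrixP/(_ 0 0) uab.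
  case/eq_row_mx: ubP => /matrixP/(_ 0 0) uba /matrixP/(_ 0 0) ubb.
  rewrite !mxE /= in uaa uab uba ubb.
  have key (u : 'rV[F]_k) (c d : 'I_k) : c \in [set a; b] -> d \in [set a; b] -> c != d ->
     u 0 c = 1 -> u 0 d = 0 ->
     point u \in Mset [set a; b] [set v1] \/
     exists l mu, mu * l = 1 /\ u = mu *: (v1 + l *: unitv F c).
    move=> cT dT cd uc ud.
    have Td : [set a; b] = [set c; d].
      apply/setP => i; rewrite !inE.
      move: cT dT cd; rewrite !inE => /orP [] /eqP -> /orP [] /eqP ->;
        rewrite ?eqxx //= => _; by rewrite orbC.
    have u0 : u != 0 by apply/negP => /eqP u0; move: uc; rewrite u0 mxE; apply/eqP; rewrite eq_sym oner_eq0.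
    case hM : [|| inX [set a; b] u, inY [set a; b] [set v1] u | inZ [set a; b] u].
      by left; apply: MsetI.
    right.
    have nY : ~~ inY [set a; b] [set v1] u by apply/negP => h; move: hM; rewrite h orbT.
    have c1 : #|supp u :&: [set a; b]| == 1%N.
      apply/cards1P; exists c; apply/setP => i; rewrite Td !inE.
      case: (eqVneq i c) => [-> | ic]; first by rewrite uc oner_eq0.
      case: (eqVneq i d) => [-> | id]; by rewrite ?ud ?eqxx ?andbF.
    have [j [l [mu [jT e]]]] := exc_form nY u0 c1.
    have vc : v1 0 c = 0 by move: cT; rewrite !inE => /orP [] /eqP ->.
    move: jT; rewrite Td !inE => /orP [] /eqP ej; subst j.
      exists l, mu; split => //; move: uc; rewrite e coordY vc eqxx add0r mulr1 //.
    have dc : (d == c) = false by rewrite eq_sym (negbTE cd).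
    move: uc; rewrite e coordY vc dc mulr0 addr0 mulr0 => /eqP.
    by rewrite eq_sym oner_eq0.
  have aT : a \in [set a; b] by rewrite !inE eqxx.
  have bT : b \in [set a; b] by rewrite !inE eqxx orbT.
  case: (key ua a b aT bT ab uaa uab) => [h | [l [mu [hl ea]]]]; first by exists ua.
  case: (key ub b a bT aT _ ubb uba) => [|h | [l' [mu' [hl' eb]]]]; first by rewrite eq_sym.
    by exists ub.
  exists (mu' *: ua + (- mu) *: ub); first by apply: addmx_sub; apply: scalemx_sub.
  apply: MsetI.
  have ui i : (mu' *: ua + (- mu) *: ub) 0 i = mu' * (a == i)%:R - mu * (b == i)%:R.
    rewrite mxE [in LHS]mxE [(- mu *: ub) 0 i]mxE ea eb !coordY.
    transitivity (mu' * (mu * l) * (a == i)%:R - mu * (mu' * l') * (b == i)%:R); first by ring.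
    by rewrite hl hl' !mulr1.
  have sT : supp (mu' *: ua + (- mu) *: ub) = [set a; b].
    apply/setP => i; rewrite !inE ui.
    have ba : (b == a) = false by rewrite eq_sym (negbTE ab).
    have mu'0 : mu' != 0 by apply/eqP => h0; move: hl'; rewrite h0 mul0r => /eqP; rewrite eq_sym oner_eq0.
    have mu0 : mu != 0 by apply/eqP => h0; move: hl; rewrite h0 mul0r => /eqP; rewrite eq_sym oner_eq0.
    case: (eqVneq a i) => [<- | ai].
      by rewrite /= ba mulr0 subr0 mulr1n mulr1 mu'0.
    case: (eqVneq b i) => [_ | bi].
      by rewrite /= mulr0 mulr1n mulr1 sub0r oppr_eq0 mu0.
    by rewrite /= !mulr0 subr0 eqxx.
  by rewrite /inZ sT subxx cards2 ab !orbT.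
move=> _.
have : (W :&: kermx P)%MS != 0 by rewrite -mxrank_eq0 -lt0n.
case/rowV0Pn => u uWK u0.
exists u; first exact: submx_trans uWK (capmxSl _ _).
have := submx_trans uWK (capmxSr _ _); rewrite sub_kermx uP => /eqP.
rewrite -row_mx0 => /eq_row_mx [/matrixP/(_ 0 0) ha /matrixP/(_ 0 0) hb].
rewrite !mxE in ha hb.
apply: MsetI; apply/orP; left; rewrite /inX u0 /= -setI_eq0; apply/eqP/setP => i.
rewrite !inE; case: (eqVneq i a) => [-> | ia]; first by rewrite ha eqxx.
by case: (eqVneq i b) => [-> | ib]; rewrite ?hb ?eqxx ?andbF.
Qed.

Lemma prop_nz (F : finFieldType) k (T : {set 'I_k}) V (y : 'rV[F]_k) :
  [|| inX T y, inY T V y | inZ T y] -> y != 0.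
Proof.
case/or3P; rewrite /inX /inY /inZ; [by case/andP | by case/and3P |].
case/andP => _; apply: contraL => /eqP ->.
have -> : supp (0 : 'rV[F]_k) = set0 by apply/setP => i; rewrite !inE mxE eqxx.
by rewrite cards0.
Qed.

Lemma Mset_nz (F : finFieldType) k (T : {set 'I_k}) V (x : 'rV[F]_k) :
  point x \in Mset T V -> x != 0.
Proof.
case/MsetE => y hy e; have [mu emu] := pt_prop e.
apply/negP => /eqP x0; move: (prop_nz hy); by rewrite emu x0 scaler0 eqxx.
Qed.

Lemma rV_nz (F : finFieldType) k (x : 'rV[F]_k) : x != 0 -> exists m, x 0 m != 0.
Proof.
move=> x0; case: (pickP (fun m => x 0 m != 0)) => [m hm | h]; first by exists m.
case/negP: x0; apply/eqP/rowP => m; rewrite mxE; apply/eqP; by move: (h m) => /= /negbFE.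
Qed.

Lemma w_notin (F : finFieldType) k (a b : 'I_k) (v1 : 'rV[F]_k) :
  a != b -> v1 != 0 -> [disjoint supp v1 & [set a; b]] ->
  point (v1 + unitv F a) \notin Mset [set a; b] [set v1].
Proof.
move=> ab v10 dv1; apply/negP => /MsetE [y hy e].
have [mu emu] := pt_prop e.
have y0 := prop_nz hy.
have mu0 : mu != 0 by apply/negP => /eqP m0; move: y0; rewrite emu m0 scale0r eqxx.
have sy : supp y = supp (v1 + unitv F a) by rewrite emu supp_scale.
have aT : a \in [set a; b] by rewrite !inE eqxx.
have va : v1 0 a = 0 by apply/eqP; move: (disjointFl dv1 aT); rewrite inE => /negbFE.
have [m vm] := rV_nz v10.
have mT : m \notin [set a; b] by rewrite (disjointFr dv1) // inE.
case/or3P: hy.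
- rewrite /inX => /andP [_]; rewrite -setI_eq0 => /eqP /setP /(_ a).
  by rewrite sy !inE !mxE eqxx va add0r eqxx oner_eq0 /=.
- rewrite /inY => /and3P [_ _ /negP]; apply; apply/existsP; exists v1; rewrite inE eqxx /=.
  apply/existsP; exists a; rewrite aT /=; apply/existsP; exists 1; rewrite oner_eq0 /=.
  by rewrite -e scale1r.
- rewrite /inZ => /andP [/subsetP /(_ m)]; rewrite sy inE !mxE.
  have ma : (m == a) = false by move: mT; rewrite !inE negb_or => /andP [/negbTE].
  by rewrite ma andbF addr0 vm => /(_ isT); rewrite (negbTE mT).
Qed.

Lemma natb_eq0 (F : finFieldType) (b : bool) : ((b%:R : F) == 0) = ~~ b.
Proof. by case: b; rewrite /= ?mulr1n ?oner_eq0 ?mulr0n ?eqxx. Qed.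

Lemma e_in (F : finFieldType) k (a b : 'I_k) (v1 : 'rV[F]_k) i :
  v1 != 0 -> [disjoint supp v1 & [set a; b]] ->
  point (unitv F i) \in Mset [set a; b] [set v1].
Proof.
move=> v10 dv1; apply: MsetI.
have e0 : unitv F i != 0 by apply/negP => /eqP /rowP /(_ i); rewrite unitvE mxE eqxx => /eqP; rewrite oner_eq0.
have se : supp (unitv F i) = [set i].
 by apply/setP => j; rewrite !inE unitvE natb_eq0 negbK eq_sym.
case iT : (i \in [set a; b]).
  apply/orP; right; apply/orP; left.
  rewrite /inY e0 se /=.
  have -> : [set i] :&: [set a; b] = [set i] by apply/setP => j; rewrite !inE; case: (eqVneq j i) => // ->; rewrite -(inE ) ?iT //; move: iT; rewrite !inE.
  rewrite cards1 eqxx /=.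
  apply/negP => /existsP [v /andP [/set1P -> /existsP [j /andP [jT /existsP [l /andP [l0 /eqP e]]]]]].
  have [mu emu] := pt_prop e.
  have [m vm] := rV_nz v10.
  have mT : m \notin [set a; b] by rewrite (disjointFr dv1) // inE.
  have mj : (m == j) = false by apply/negbTE; apply/negP => /eqP ej; move: mT; rewrite ej jT.
  have mi : (m == i) = false by apply/negbTE; apply/negP => /eqP ej; move: mT; rewrite ej iT.
  move/rowP: emu => /(_ m); rewrite !mxE mj mi !andbF.
  by rewrite mulr0 addr0 mulr0 => /eqP; rewrite (negbTE vm).
apply/orP; left; rewrite /inX e0 se /= -setI_eq0; apply/eqP/setP => j; rewrite !inE.
by case: (eqVneq j i) => // ->; move: iT; rewrite !inE => ->.
Qed.

Lemma bigmin_eq (I : finType) (P : pred I) (f : I -> nat) x0 v i0 :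
  P i0 -> f i0 = v -> (v <= x0)%N -> (forall i, P i -> v <= f i)%N ->
  \big[minn/x0]_(i | P i) f i = v.
Proof.
move=> Pi0 fi0 vx0 hv; apply/eqP; rewrite eqn_leq; apply/andP; split.
  by have := @Order.TotalTheory.bigmin_le_cond _ nat I x0 i0 P f Pi0; rewrite minEnat leEnat fi0.
by elim/big_ind: _ => // x y hx hy; rewrite leq_min hx hy.
Qed.

Lemma entry_col (F : finFieldType) k n (M : 'rV[F]_k) (G : 'M[F]_(k, n)) j :
  (M *m G) 0 j = (M *m col j G) 0 0.
Proof. by rewrite colE mulmxA -(colE j (M *m G)) [RHS]mxE. Qed.

Lemma pt_coord (F : finFieldType) k (x y : 'rV[F]_k) i :
  point x = point y -> x 0 i = 0 -> y 0 i = 0.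
Proof. by move=> e xi; have [mu ->] := pt_prop e; rewrite mxE xi mulr0. Qed.

Lemma cov_lb (F : finFieldType) k n (G : 'M[F]_(k, n)) (a b : 'I_k) (v1 : 'rV[F]_k) r :
  a != b -> v1 0 a = 0 -> v1 0 b = 0 ->
  (forall P, P \in Mset [set a; b] [set v1] -> exists j : 'I_n, point (col j G)^T = P) ->
  cov_ok G r -> (k - 1 <= r)%N.
Proof.
move=> ab va vb surj.
case/andP => _ /existsP [D /and3P [DG /eqP rD sfD]].
rewrite leqNgt; apply/negP => hr.
pose B := D *m pinvmx G.
have BG : B *m G = D := mulmxKpV DG.
pose W := kermx B^T.
have rB : (\rank B <= r)%N by rewrite -rD mxrankM_maxl.
have rW : (2 <= \rank W)%N by rewrite mxrank_ker mxrank_tr; lia.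
have [u uW uM] := lineM ab va vb rW.
have [j ej] := surj _ uM.
have [mu emu] := pt_prop (esym ej).
have cW : ((col j G)^T <= W)%MS by rewrite emu scalemx_sub.
have Bc : B *m col j G = 0.
  by move: cW; rewrite sub_kermx -trmx_mul trmx_eq0 => /eqP.
move/forallP: sfD => /(_ j) /existsP [x /andP [xD xj]].
case/submxP: xD xj => y ->.
by rewrite -BG mulmxA entry_col -mulmxA Bc mulmx0 mxE eqxx.
Qed.

Lemma cov_wit (F : finFieldType) k n (G : 'M[F]_(k, n)) (a b : 'I_k) (v1 : 'rV[F]_k) :
  a != b -> v1 != 0 -> [disjoint supp v1 & [set a; b]] -> row_free G ->
  (forall j : 'I_n, point (col j G)^T \in Mset [set a; b] [set v1]) -> (2 <= k)%N ->
  cov_ok G (k - 1).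
Proof.
move=> ab v10 dv1 rfG colM k2.
have aT : a \in [set a; b] by rewrite !inE eqxx.
have va : v1 0 a = 0 by apply/eqP; move: (disjointFl dv1 aT); rewrite inE => /negbFE.
pose w := v1 + unitv F a.
have wa : w 0 a = 1 by rewrite /w !mxE va !eqxx add0r /= mulr1n.
have w0 : w != 0 by apply/negP => /eqP w0; move: wa; rewrite w0 mxE => /eqP; rewrite eq_sym oner_eq0.
pose K := kermx w^T.
apply/andP; split; first by rewrite subn_gt0.
apply/existsP; exists <<K *m G>>%MS; apply/and3P; split.
- by rewrite genmxE submxMl.
- by rewrite mxrank_gen mxrankMfree // mxrank_ker mxrank_tr rank_rV w0.
apply/forallP => i; have ci := colM i.
have [m hm] : exists m, (col i G)^T 0 m - w 0 m * (col i G)^T 0 a != 0.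
  case: (pickP (fun m => (col i G)^T 0 m - w 0 m * (col i G)^T 0 a != 0)) => [m hm | h].
    by exists m.
  have ecw : (col i G)^T = ((col i G)^T 0 a) *: w.
    apply/rowP => m; rewrite [in RHS]mxE mulrC; apply/eqP; rewrite -subr_eq0.
    by move: (h m) => /= /negbFE.
  have ca : (col i G)^T 0 a != 0.
    apply/negP => /eqP ca; move: (Mset_nz ci); by rewrite ecw ca scale0r eqxx.
  have := w_notin ab v10 dv1; by rewrite -/w -(pt_scale w ca) -ecw ci.
pose u := unitv F m - w 0 m *: unitv F a.
apply/existsP; exists (u *m G); apply/andP; split.
  rewrite genmxE submxMr // sub_kermx /u mulmxBl -scalemxAl /unitv -!rowE.
  by apply/eqP/rowP => z; rewrite !mxE (ord1 z) va !eqxx add0r /= mulr1n mulr1 subrr.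
by move: hm; rewrite /u mulmxBl -scalemxAl /unitv -!rowE !mxE.
Qed.

Lemma dual_lb (F : finFieldType) k n (G : 'M[F]_(k, n)) (y : 'rV[F]_n) :
  (forall j, (col j G)^T != 0) ->
  injective (fun j : 'I_n => point (col j G)^T) ->
  G *m y^T = 0 -> y != 0 -> (3 <= wt y)%N.
Proof.
move=> c0 inj Gy y0.
have yG : y *m G^T = 0 by apply: trmx_inj; rewrite trmx_mul trmxK Gy trmx0.
have sumE : y *m G^T = \sum_(j in supp y) y 0 j *: (col j G)^T.
  rewrite mulmx_sum_row (bigID (mem (supp y))) /= [X in _ + X]big1 ?addr0.
    by apply: eq_bigr => j _; rewrite tr_col.
  by move=> j; rewrite inE negbK => /eqP ->; rewrite scale0r.
rewrite /wt; case: (ltnP 2 #|supp y|) => // hle.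
have [m ym] := rV_nz y0.
have : (0 < #|supp y|)%N by apply/card_gt0P; exists m; rewrite inE.
move: hle; rewrite leq_eqVlt ltnS leq_eqVlt ltnS leqn0.
case/or3P => [/cards2P [j [j' [jj' sy]]] | /cards1P [j sy] | /eqP ->] // _.
  move: yG; rewrite sumE sy big_setU1 ?inE //= big_set1 => /eqP.
  rewrite addr_eq0 => /eqP e.
  have yj : y 0 j != 0.
    have : j \in supp y by rewrite sy !inE eqxx.
    by rewrite inE.
  have yj' : y 0 j' != 0.
    have : j' \in supp y by rewrite sy !inE eqxx orbT.
    by rewrite inE.
  have ec : (col j' G)^T = (- ((y 0 j')^-1 * y 0 j)) *: (col j G)^T.
    by rewrite scaleNr -scalerA e scalerN opprK scalerA mulVf // scale1r.
  case/negP: jj'; apply/eqP; apply: inj => /=; rewrite ec pt_scale //.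
  by rewrite oppr_eq0 mulf_neq0 // invr_eq0.
move: yG; rewrite sumE sy big_set1 => /eqP; rewrite scalemx_eq0 (negbTE (c0 j)) orbF.
have : j \in supp y by rewrite sy inE.
by rewrite inE => /negbTE ->.
Qed.

Unset Implicit Arguments. Set Strict Implicit. Set Printing Implicit Defensive.

Theorem mainTheorem18 (F : finFieldType) (k : nat) (T : {set 'I_k})
    (v1 : 'rV[F]_k) (n : nat) (G : 'M[F]_(k, n)) :
  (3 <= k)%N -> #|T| = 2%N ->
  v1 != 0 -> [disjoint supp v1 & T] ->
  (* the columns of G represent points of M, one column for each point *)
  (forall j : 'I_n, point (col j G)^T \in Mset T [set v1]) ->
  injective (fun j : 'I_n => point (col j G)^T) ->
  (forall P, P \in Mset T [set v1] -> exists j : 'I_n, point (col j G)^T = P) ->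
  [/\ n = #|Mset T [set v1]|, \rank G = k,
      dual_dist G = 3%N,
      gamma G = Some (k - 1)%N
    & gamma G = Some (k - dual_dist G + 2)%N].
Proof.
move=> k3 T2 v10 dv1 colM inj surj.
have /cards2P [a [b [ab Tab]]] : #|T| == 2%N by rewrite T2.
subst T.
have aT : a \in [set a; b] by rewrite !inE eqxx.
have bT : b \in [set a; b] by rewrite !inE eqxx orbT.
have va : v1 0 a = 0 by apply/eqP; move: (disjointFl dv1 aT); rewrite inE => /negbFE.
have vb : v1 0 b = 0 by apply/eqP; move: (disjointFl dv1 bT); rewrite inE => /negbFE.
have c0 j : (col j G)^T != 0 := Mset_nz (colM j).
have hn : n = #|Mset [set a; b] [set v1]|.
  have -> : Mset [set a; b] [set v1] = [set point (col j G)^T | j in [set: 'I_n]].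
    apply/setP => P; apply/idP/imsetP => [/surj [j <-] | [j _ ->]]; last exact: colM.
    by exists j; rewrite ?inE.
  by rewrite (card_imset _ inj) cardsT card_ord.
have rG : \rank G = k.
  apply/eqP; rewrite eqn_leq rank_leq_row /=.
  rewrite -mxrank_tr -[X in (X <= _)%N](mxrank1 F k).
  apply: mxrankS; apply/row_subP => i; rewrite row1.
  have [j ej] := surj _ (e_in i v10 dv1).
  apply: (submx_trans (B := (col j G)^T)).
    by move/genmxP: ej => /andP [_ h]; exact: h.
  by rewrite tr_col row_sub.
have rfG : row_free G by rewrite /row_free rG.
have [j1 e1] := surj _ (e_in a v10 dv1).
have [j2 e2] := surj _ (e_in b v10 dv1).
pose z := unitv F a + unitv F b.
have za : z 0 a = 1 by rewrite /z !mxE !eqxx (negbTE ab) /= mulr1n mulr0n addr0.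
have zb : z 0 b = 1 by rewrite /z !mxE !eqxx eq_sym (negbTE ab) /= mulr1n mulr0n add0r.
have zM : point z \in Mset [set a; b] [set v1].
  apply: MsetI; apply/orP; right; apply/orP; right.
  have sz : supp z = [set a; b].
    apply/setP => i; rewrite !inE.
    case: (eqVneq i a) => [->|ia]; first by rewrite za oner_eq0.
    case: (eqVneq i b) => [->|ib]; first by rewrite zb oner_eq0.
    by rewrite /z !mxE (negbTE ia) (negbTE ib) !andbF /= mulr0n addr0 eqxx.
  by rewrite /inZ sz subxx cards2 ab.
have [j3 e3] := surj _ zM.
have [al ea] := pt_prop (esym e1).
have [be eb] := pt_prop (esym e2).
have [ga ec] := pt_prop (esym e3).
have al0 : al != 0 by apply/negP => /eqP h; move: (c0 j1); rewrite ea h scale0r eqxx.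
have be0 : be != 0 by apply/negP => /eqP h; move: (c0 j2); rewrite eb h scale0r eqxx.
have ga0 : ga != 0 by apply/negP => /eqP h; move: (c0 j3); rewrite ec h scale0r eqxx.
have ua (b' a' : 'I_k) : a' != b' -> (unitv F a') 0 b' = 0.
  by move=> h; rewrite unitvE (negbTE h).
have h12 : j1 != j2.
  apply/negP => /eqP e; move: e1 e2; rewrite e => -> e2.
  by move: (pt_coord e2 (ua _ _ ab)); rewrite unitvE eqxx /= mulr1n => /eqP; rewrite oner_eq0.
have h13 : j1 != j3.
  apply/negP => /eqP e; move: e1 e3; rewrite e => -> e3.
  by move: (pt_coord e3 (ua _ _ ab)); rewrite zb => /eqP; rewrite oner_eq0.
have h23 : j2 != j3.
  apply/negP => /eqP e; move: e2 e3; rewrite e => -> e3.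
  have ba : b != a by rewrite eq_sym.
  by move: (pt_coord e3 (ua _ _ ba)); rewrite za => /eqP; rewrite oner_eq0.
pose y : 'rV[F]_n := (ga * be) *: delta_mx 0 j1 + (ga * al) *: delta_mx 0 j2
   + (- (al * be)) *: delta_mx 0 j3.
have Gy : G *m y^T = 0.
  apply: trmx_inj; rewrite trmx_mul trmxK trmx0 /y !mulmxDl -!scalemxAl -!rowE -!tr_col.
  rewrite ea eb ec /z; apply/rowP => i; rewrite !mxE; ring.
have yj j : y 0 j = ga * be * (j == j1)%:R + ga * al * (j == j2)%:R - al * be * (j == j3)%:R.
  by rewrite !mxE /= mulNr.
have sy : supp y = [set j1; j2; j3].
  apply/setP => j; rewrite inE yj !inE.
  case: (eqVneq j j1) => [->|n1].
    by rewrite (negbTE h12) (negbTE h13) /= mulr1n !mulr0n !mulr0 subr0 addr0 mulr1 mulf_neq0.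
  case: (eqVneq j j2) => [->|n2].
    by rewrite (negbTE h23) /= mulr1n !mulr0n !mulr0 subr0 add0r mulr1 mulf_neq0.
  case: (eqVneq j j3) => [_|n3].
    by rewrite /= mulr1n !mulr0n !mulr0 add0r sub0r mulr1 oppr_eq0 mulf_neq0.
  by rewrite /= !mulr0n !mulr0 add0r subr0 eqxx.
have y0 : y != 0.
  have : j1 \in supp y by rewrite sy !inE eqxx.
  by rewrite inE; apply: contraNneq => ->; rewrite mxE.
have wy : wt y = 3%N.
  rewrite /wt sy.
  have -> : [set j1; j2; j3] = j1 |: (j2 |: [set j3]) by apply/setP => x; rewrite !inE orbA.
  by rewrite !cardsU1 cards1 !inE negb_or h12 h13 h23.
have n3 : (3 <= n)%N by rewrite -wy /wt; apply: leq_trans (max_card _) _; rewrite card_ord.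
have dd : dual_dist G = 3%N.
  rewrite /dual_dist; apply: (bigmin_eq (i0 := y)).
  - by apply/andP; split; [apply/eqP | exact: y0].
  - exact: wy.
  - exact: (leq_trans n3 (leqnSn n)).
  by move=> x /andP [/eqP Gx x0]; apply: dual_lb.
have sfG : supp_full G.
  apply/forallP => i; have [m hm] := rV_nz (c0 i).
  apply/existsP; exists (row m G); rewrite row_sub /=.
  by move: hm; rewrite !mxE.
have gG : gamma G = Some (k - 1)%N.
  rewrite /gamma sfG; congr Some.
  have kn : (k - 1 < n.+1)%N.
    by rewrite ltnS; apply: leq_trans (leq_subr 1 k) _; rewrite -[X in (X <= _)%N]rG rank_leq_col.
  apply: (bigmin_eq (i0 := Ordinal kn)).
  - exact: (cov_wit ab v10 dv1 rfG colM (ltnW k3)).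
  - by [].
  - exact: ltnW kn.
  - by move=> r hr; apply: (cov_lb ab va vb surj hr).
have e32 : (k - 3 + 2 = k - 1)%N by clear -k3; lia.
split => //.
by rewrite dd gG e32.
Qed.
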